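(* Let $H$ be obtained from $F_4$ by adding a new vertex and joining it to four distinct vertices of $F_4$. Then $H$ contains $K_{3,4}$ as a minor.
   Context: $F_4$ is the graph with vertex set $\{f^1,f^2\}\cup\{f^i_j: i\in\{1,2\}, j\in\{1,2,3,4\}\}$ and the 16 edges: for each $i\in\{1,2\}$, $f^if^i_1$, $f^if^i_2$, $f^if^i_4$, $f^i_3f^i_1$, $f^i_3f^i_2$, $f^i_3f^i_4$; and $f^1_jf^2_{5-j}$ for $j=1,2,3,4$. *)

(* Defs.v *)
From mathcomp Require Import all_boot.
Set Implicit Arguments. Unset Strict Implicit. Unset Printing Implicit Defensive.

(* A (simple) graph is a relation e on a finType; we only use symmetric ones. *)

Definition connected_in (T : finType) (e : rel T) (X : {set T}) : Prop :=
  forall x y, x \in X -> y \in X ->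
    connect [rel u v | [&& e u v, u \in X & v \in X]] x y.

Definition has_minor (T : finType) (e : rel T) (T' : finType) (e' : rel T') : Prop :=
  exists phi : T' -> {set T},
    [/\ forall u, phi u != set0,
        forall u v, u != v -> [disjoint phi u & phi v],
        forall u, connected_in e (phi u)
      & forall u v, e' u v -> exists x y, [/\ x \in phi u, y \in phi v & e x y]].

Definition Kmn_vert (m n : nat) : finType := ('I_m + 'I_n)%type.
Definition Kmn_rel (m n : nat) : rel (Kmn_vert m n) :=
  fun u v => match u, v with
             | inl _, inr _ | inr _, inl _ => true
             | _, _ => false
             end.

(* Vertices encoded in 'I_10:  f^i = i-1 (i=1,2),  f^i_j = 2 + 4(i-1) + (j-1). *)
Definition fv (i : nat) : nat := i.-1.
Definition fvj (i j : nat) : nat := 2 + 4 * i.-1 + j.-1.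

Definition F4_edges : seq (nat * nat) :=
  flatten [seq [:: (fv i, fvj i 1); (fv i, fvj i 2); (fv i, fvj i 4);
                   (fvj i 3, fvj i 1); (fvj i 3, fvj i 2); (fvj i 3, fvj i 4)]
          | i <- [:: 1; 2]]
  ++ [seq (fvj 1 j, fvj 2 (5 - j)) | j <- [:: 1; 2; 3; 4]].

Definition F4_rel : rel 'I_10 :=
  fun x y => ((nat_of_ord x, nat_of_ord y) \in F4_edges)
             || ((nat_of_ord y, nat_of_ord x) \in F4_edges).

(* H = F_4 plus a new vertex (None) joined to the vertices of S. *)
Definition H_rel (S : {set 'I_10}) : rel (option 'I_10) :=
  fun u v => match u, v with
             | Some x, Some y => F4_rel x y
             | None, Some y => y \in S
             | Some x, None => x \in S
             | None, None => false
             end.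
Arguments Kmn_rel : clear implicits.

(* Main.v *)
Require Import Defs.
From mathcomp Require Import all_boot.
From mathcomp Require Import zify.
Set Implicit Arguments. Unset Strict Implicit. Unset Printing Implicit Defensive.

Definition vtx (n : nat) : option 'I_10 := insub n.

Definition Hp (p : pred 'I_10) : rel (option 'I_10) :=
  fun u v => match u, v with
             | Some x, Some y => F4_rel x y
             | None, Some y => p y
             | Some x, None => p x
             | None, None => false
             end.

Definition adj (l : seq nat) (a b : nat) : bool :=
  [|| (a, b) \in F4_edges, (b, a) \in F4_edges,
      [&& a == 10, b \in l & b < 10] | [&& b == 10, a \in l & a < 10]].

Definition chainok (l : seq nat) (B : seq nat) : bool :=
  match B with
  | [::] => false
  | _ :: _ => all (fun i => has (adj l (nth 0 B i)) (take i B)) (iota 1 (size B).-1)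
  end.

Definition blk (m : seq (seq nat)) i := nth [::] m i.

Definition goodn (l : seq nat) (m : seq (seq nat)) : bool :=
  [&& all (fun i => [&& blk m i != [::], all (fun a => a <= 10) (blk m i)
                     & has (chainok l) (permutations (blk m i))]) (iota 0 7),
      all (fun i => all (fun j => (i != j) ==> all (fun a => a \notin blk m j) (blk m i))
                       (iota 0 7)) (iota 0 7)
    & all (fun i => all (fun j => ((i < 3) != (j < 3)) ==>
              has (fun a => has (adj l a) (blk m j)) (blk m i)) (iota 0 7)) (iota 0 7)].

Definition models : seq (seq (seq nat)) :=
[:: [:: [:: 1]; [:: 2; 4; 5]; [:: 3; 8]; [:: 6]; [:: 7]; [:: 9]; [:: 10]];
 [:: [:: 0; 1; 10]; [:: 2; 4; 5]; [:: 8]; [:: 3]; [:: 6]; [:: 7]; [:: 9]];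
 [:: [:: 1; 2; 9]; [:: 3; 8]; [:: 4; 5]; [:: 0]; [:: 6]; [:: 7]; [:: 10]];
 [:: [:: 2; 9]; [:: 3]; [:: 5; 6]; [:: 0]; [:: 4]; [:: 8]; [:: 10]];
 [:: [:: 4]; [:: 8]; [:: 10]; [:: 0; 5; 6]; [:: 2; 9]; [:: 3]; [:: 7]];
 [:: [:: 0; 1; 5; 6]; [:: 2; 4]; [:: 8]; [:: 3]; [:: 7]; [:: 9]; [:: 10]];
 [:: [:: 0; 5; 6]; [:: 3; 4]; [:: 9]; [:: 1; 7]; [:: 2]; [:: 8]; [:: 10]];
 [:: [:: 2; 9]; [:: 4; 7]; [:: 5; 6]; [:: 0; 3]; [:: 1]; [:: 8]; [:: 10]];
 [:: [:: 0]; [:: 4]; [:: 7; 8]; [:: 2; 9]; [:: 3]; [:: 5; 6]; [:: 10]];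
 [:: [:: 0; 3; 8]; [:: 1; 6]; [:: 2; 4]; [:: 5]; [:: 7]; [:: 9]; [:: 10]];
 [:: [:: 0; 3; 8]; [:: 1; 9]; [:: 4; 5]; [:: 2]; [:: 6]; [:: 7]; [:: 10]];
 [:: [:: 0; 10]; [:: 2; 4]; [:: 8]; [:: 3]; [:: 5; 6]; [:: 7]; [:: 9]];
 [:: [:: 1; 5; 6]; [:: 2; 4]; [:: 3; 8]; [:: 0]; [:: 7]; [:: 9]; [:: 10]];
 [:: [:: 0; 2; 9]; [:: 3; 4]; [:: 6]; [:: 1; 7]; [:: 5]; [:: 8]; [:: 10]];
 [:: [:: 4]; [:: 8]; [:: 10]; [:: 0; 2; 9]; [:: 3]; [:: 5; 6]; [:: 7]];
 [:: [:: 0; 1; 2; 9]; [:: 4; 5]; [:: 8]; [:: 3]; [:: 6]; [:: 7]; [:: 10]];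
 [:: [:: 0]; [:: 4; 7]; [:: 8]; [:: 2; 9]; [:: 3]; [:: 5; 6]; [:: 10]];
 [:: [:: 0; 10]; [:: 4; 5]; [:: 8]; [:: 2; 9]; [:: 3]; [:: 6]; [:: 7]];
 [:: [:: 2; 9]; [:: 5; 6]; [:: 7; 8]; [:: 0; 3]; [:: 1]; [:: 4]; [:: 10]];
 [:: [:: 1; 5; 6]; [:: 2]; [:: 7; 8]; [:: 0; 3]; [:: 4]; [:: 9]; [:: 10]];
 [:: [:: 0; 1; 5; 6]; [:: 4]; [:: 8; 9]; [:: 2]; [:: 3]; [:: 7]; [:: 10]];
 [:: [:: 0; 2]; [:: 1; 4; 7]; [:: 6; 8]; [:: 3]; [:: 5]; [:: 9]; [:: 10]];
 [:: [:: 0; 5]; [:: 1; 4; 7]; [:: 8; 9]; [:: 2]; [:: 3]; [:: 6]; [:: 10]];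
 [:: [:: 4; 5]; [:: 8]; [:: 10]; [:: 1; 2; 9]; [:: 3]; [:: 6]; [:: 7]];
 [:: [:: 1]; [:: 2; 3; 4; 5]; [:: 8]; [:: 6]; [:: 7]; [:: 9]; [:: 10]];
 [:: [:: 2; 4]; [:: 8]; [:: 10]; [:: 1; 5; 6]; [:: 3]; [:: 7]; [:: 9]];
 [:: [:: 0; 1; 2; 9]; [:: 4]; [:: 6; 8]; [:: 3]; [:: 5]; [:: 7]; [:: 10]];
 [:: [:: 1; 2; 9]; [:: 5]; [:: 7; 8]; [:: 0; 3]; [:: 4]; [:: 6]; [:: 10]];
 [:: [:: 0; 5; 6]; [:: 4; 7]; [:: 8; 9]; [:: 1]; [:: 2]; [:: 3]; [:: 10]];
 [:: [:: 0; 2; 9]; [:: 4; 7]; [:: 6; 8]; [:: 1]; [:: 3]; [:: 5]; [:: 10]];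
 [:: [:: 3]; [:: 7]; [:: 9]; [:: 0; 1; 5; 6]; [:: 2; 4]; [:: 8]; [:: 10]];
 [:: [:: 0; 5; 6]; [:: 4; 7]; [:: 10]; [:: 1; 9]; [:: 2]; [:: 3]; [:: 8]];
 [:: [:: 1; 5; 6]; [:: 3; 8]; [:: 10]; [:: 0; 2]; [:: 4]; [:: 7]; [:: 9]];
 [:: [:: 0; 3; 8]; [:: 1; 4; 7]; [:: 10]; [:: 2]; [:: 5]; [:: 6]; [:: 9]];
 [:: [:: 2; 9]; [:: 5; 6]; [:: 10]; [:: 0; 3]; [:: 1; 7]; [:: 4]; [:: 8]];
 [:: [:: 3]; [:: 6]; [:: 7]; [:: 0; 1; 2; 9]; [:: 4; 5]; [:: 8]; [:: 10]];
 [:: [:: 0; 2; 9]; [:: 4; 7]; [:: 10]; [:: 1; 6]; [:: 3]; [:: 5]; [:: 8]];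
 [:: [:: 1; 2; 9]; [:: 3; 8]; [:: 10]; [:: 0; 5]; [:: 4]; [:: 6]; [:: 7]]].


Definition allcheck : bool :=
  all (fun a => all (fun b => all (fun c => all (fun d =>
     has (goodn [:: a; b; c; d]) models)
     (iota c.+1 (9 - c))) (iota b.+1 (9 - b))) (iota a.+1 (9 - a))) (iota 0 10).

Lemma allcheckT : allcheck.
Proof. vm_compute. reflexivity. Qed.

Definition oval (x : option 'I_10) : nat := if x is Some y then val y else 10.

Lemma ovalK a : a <= 10 -> oval (vtx a) = a.
Proof.
rewrite /vtx; case: insubP => [u _ <- //|]; rewrite -leqNgt => h1 h2.
by apply/eqP; rewrite /= eqn_leq h1 h2.
Qed.

Lemma vtx_oval x : vtx (oval x) = x.
Proof.
case: x => [y|] /=; first by rewrite /vtx valK.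
by rewrite /vtx insubF.
Qed.

Lemma vtxS a (h : a < 10) : vtx a = Some (Ordinal h).
Proof. by rewrite /vtx insubT. Qed.
Lemma vtxN : vtx 10 = None.
Proof. by rewrite /vtx insubF. Qed.

Lemma F4_edges_lt p : p \in F4_edges -> (p.1 < 10) && (p.2 < 10).
Proof. by move: p; apply/allP; vm_compute. Qed.

Lemma H_rel_sym S : symmetric (H_rel S).
Proof. by case=> [x|] [y|] //=; rewrite /F4_rel orbC. Qed.

Lemma H_adj (S : {set 'I_10}) (l : seq nat) : (forall x : 'I_10, (x \in S) = (val x \in l)) ->
  forall a b, a <= 10 -> b <= 10 -> H_rel S (vtx a) (vtx b) = adj l a b.
Proof.
move=> hl a b ha hb.
have Ea : a < 10 \/ a = 10 by lia.
have Eb : b < 10 \/ b = 10 by lia.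
have noe : forall c, ((c, 10) \in F4_edges) = false /\ ((10, c) \in F4_edges) = false.
  by move=> c; split; apply/negbTE/negP => /F4_edges_lt /andP [] /=; rewrite ?ltnn.
rewrite /adj.
case: Ea => [ha'|->]; case: Eb => [hb'|->].
- rewrite (vtxS ha') (vtxS hb') /= /F4_rel /=.
  have -> : (a == 10) = false by apply/negbTE; rewrite neq_ltn ha'.
  have -> : (b == 10) = false by apply/negbTE; rewrite neq_ltn hb'.
  by rewrite orbF.
- rewrite (vtxS ha') vtxN /= hl /=.
  rewrite ?(noe a).1 ?(noe a).2 ?(noe b).1 ?(noe b).2 ?ltnn ?andbF ?ha' ?hb' ?andbT ?orbF ?orbT //.
- rewrite (vtxS hb') vtxN /= hl /=.
  rewrite ?(noe a).1 ?(noe a).2 ?(noe b).1 ?(noe b).2 ?ltnn ?andbF ?ha' ?hb' ?andbT ?orbF ?orbT //.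
- by rewrite vtxN /= ltnn !andbF.
Qed.

Section Conn.
Variables (S : {set 'I_10}) (l : seq nat).
Hypothesis hl : forall x : 'I_10, (x \in S) = (val x \in l).

Lemma chain_conn (X : {set option 'I_10}) B :
  chainok l B -> all (fun a => a <= 10) B -> (forall a, a \in B -> vtx a \in X) ->
  forall i, i < size B ->
  connect [rel u v | [&& H_rel S u v, u \in X & v \in X]]
     (vtx (nth 0 B 0)) (vtx (nth 0 B i)).
Proof.
move=> hc /allP hB hX i; elim/ltn_ind: i => -[_|i IH hs]; first by move=> _; apply: connect0.
have hc' : has (adj l (nth 0 B i.+1)) (take i.+1 B).
  case: B hc hB hX hs {IH} => [//|b0 B] hc hB hX hs.
  move/allP: hc => /(_ i.+1); apply; rewrite mem_iota /=. by move: hs; rewrite add1n.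
case/hasP: hc' => b hbt hadj.
set k := index b (take i.+1 B).
have hk : k < size (take i.+1 B) by rewrite index_mem.
have hk' : k < i.+1 by move: hk; rewrite size_take hs.
have hbk : nth 0 B k = b.
  by rewrite -(nth_take 0 hk') nth_index.
have hkB : k < size B by exact: ltn_trans hk' hs.
apply: connect_trans (IH k hk' hkB) _.
apply: connect1 => /=.
have hb : b \in B by rewrite -hbk mem_nth.
have hn : nth 0 B i.+1 \in B by rewrite mem_nth.
rewrite hbk hX // hX // andbT H_rel_sym (H_adj hl) ?hB ?andbT //.
Qed.

Lemma conn_block B B' : perm_eq B' B -> chainok l B' -> all (fun a => a <= 10) B ->
  connected_in (H_rel S) [set x | x \in map vtx B].
Proof.
move=> hp hc hB.
have hB' : all (fun a => a <= 10) B' by rewrite (perm_all _ hp).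
have hX : forall a, a \in B' -> vtx a \in [set x | x \in map vtx B].
  by move=> a ha; rewrite inE map_f // -(perm_mem hp).
have key : forall x, x \in [set x | x \in map vtx B] ->
   connect [rel u v | [&& H_rel S u v, u \in [set x | x \in map vtx B]
                        & v \in [set x | x \in map vtx B]]] (vtx (nth 0 B' 0)) x.
  move=> x; rewrite inE => /mapP [a ha ->].
  have ha' : a \in B' by rewrite (perm_mem hp).
  rewrite -(nth_index 0 ha').
  by apply: chain_conn => //; rewrite index_mem.
move=> x y hx hy.
have hsym : connect_sym [rel u v | [&& H_rel S u v, u \in [set x | x \in map vtx B]
                        & v \in [set x | x \in map vtx B]]].
  apply: sym_connect_sym => u v /=; rewrite H_rel_sym; congr (_ && _); by rewrite andbC.
move: (key x hx); rewrite hsym => hx'; exact: connect_trans hx' (key y hy).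
Qed.
End Conn.

Definition kidx (u : Kmn_vert 3 4) : nat :=
  match u with inl i => nat_of_ord i | inr j => 3 + nat_of_ord j end.

Lemma kidx_lt u : kidx u < 7.
Proof. case: u => [i|j] /=; [have := ltn_ord i | have := ltn_ord j]; lia. Qed.

Lemma kidx_inj : injective kidx.
Proof.
case=> [i|j] [i'|j'] /= h; first by congr inl; apply: val_inj.
- have := ltn_ord i; lia.
- have := ltn_ord i'; lia.
- by congr inr; apply: val_inj => /=; lia.
Qed.

Lemma kidx_rel u v : Kmn_rel 3 4 u v -> (kidx u < 3) != (kidx v < 3).
Proof.
case: u => [i|j]; case: v => [i'|j'] //= _.
- by rewrite ltn_ord ltnNge leq_addr.
- by rewrite ltn_ord ltnNge leq_addr.
Qed.

Lemma goodn_minor (S : {set 'I_10}) l m :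
  (forall x : 'I_10, (x \in S) = (val x \in l)) -> goodn l m ->
  has_minor (H_rel S) (Kmn_rel 3 4).
Proof.
move=> hl /and3P [/allP h1 /allP h2 /allP h3].
exists (fun u => [set x | x \in map vtx (blk m (kidx u))]).
have hin : forall u, kidx u \in iota 0 7 by move=> u; rewrite mem_iota kidx_lt.
split.
- move=> u; case/and3P: (h1 _ (hin u)) => hne _ _.
  apply/set0Pn; case: (blk m (kidx u)) hne => [//|a B] _.
  by exists (vtx a); rewrite inE mem_head.
- move=> u v huv; rewrite -setI_eq0; apply/eqP/setP => x; rewrite !inE.
  apply/negbTE/andP => -[/mapP [a ha ->] /mapP [b hb eab]].
  case/and3P: (h1 _ (hin u)) => _ /allP hu _.
  case/and3P: (h1 _ (hin v)) => _ /allP hv _.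
  have eab' : a = b by rewrite -(ovalK (hu _ ha)) -(ovalK (hv _ hb)) eab.
  have hij : kidx u != kidx v by apply: contra huv => /eqP /kidx_inj ->.
  move/allP: (h2 _ (hin u)) => /(_ _ (hin v)); rewrite hij /= => /allP /(_ _ ha).
  by rewrite eab' hb.
- move=> u; case/and3P: (h1 _ (hin u)) => _ hall /hasP [B' hB' hc].
  rewrite mem_permutations in hB'.
  exact: (conn_block hl hB' hc hall).
- move=> u v huv.
  move/allP: (h3 _ (hin u)) => /(_ _ (hin v)); rewrite kidx_rel //=.
  case/hasP => a ha /hasP [b hb hab].
  case/and3P: (h1 _ (hin u)) => _ /allP hu _.
  case/and3P: (h1 _ (hin v)) => _ /allP hv _.
  exists (vtx a), (vtx b); rewrite !inE !map_f //; split => //.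
  by rewrite (H_adj hl) ?(hu _ ha) ?(hv _ hb).
Qed.


Theorem lemma4p13 (S : {set 'I_10}) :
  #|S| = 4 -> has_minor (H_rel S) (Kmn_rel 3 4).
Proof.
move=> hS.
set l := sort leq [seq val x | x <- enum S].
have hl : forall x : 'I_10, (x \in S) = (val x \in l).
  by move=> x; rewrite mem_sort (mem_map val_inj) mem_enum.
have hsz : size l = 4 by rewrite size_sort size_map -cardE.
have hsort : sorted ltn l.
  rewrite ltn_sorted_uniq_leq sort_uniq (map_inj_uniq val_inj) enum_uniq /=.
  rewrite /l; apply: sort_sorted => m n; exact: leq_total.
have hlt : forall a, a \in l -> a < 10.
  by move=> a; rewrite mem_sort => /mapP [x _ ->]; exact: ltn_ord.
suff : has (goodn l) models.
  by case/hasP => m _; exact: goodn_minor hl.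
move: hsort hlt {hl}; case: l hsz => [|a [|b [|c [|d [|? ?]]]]] // _.
move=> hsort hlt.
have /and4P [hab hbc hcd _] : [&& a < b, b < c, c < d & true] by exact: hsort.
have ha : a < 10 by apply: hlt; rewrite inE eqxx.
have hd : d < 10 by apply: hlt; rewrite !inE eqxx !orbT.
have := allcheckT; rewrite /allcheck.
move/allP => /(_ a); rewrite mem_iota => /(_ ltac:(lia)).
move/allP => /(_ b); rewrite mem_iota => /(_ ltac:(lia)).
move/allP => /(_ c); rewrite mem_iota => /(_ ltac:(lia)).
move/allP => /(_ d); rewrite mem_iota => /(_ ltac:(lia)).
done.
Qed.
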